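(* Let $\theta>0$, $n\ge2$, $b\in\{2,\ldots,n\}$, and integers $r_2,\ldots,r_b\ge0$ with $m:=2r_2+3r_3+\cdots+br_b$. Then $$\mathbb{E}\Big(\tilde C_2(n)^{[r_2]}\cdots\tilde C_b(n)^{[r_b]}\Big)=\mathbf{1}(m\le n)\,\frac{n!}{\lambda_n(\theta)\,\theta_{(n)}}\cdot\frac{\lambda_{n-m}(\theta)\,\theta_{(n-m)}}{(n-m)!}\prod_{j=2}^b\Big(\frac{\theta}{j}\Big)^{r_j}.$$ In particular, for $j=2,\ldots,n$, $\mathbb{E}\tilde C_j(n)=\frac{n!}{\lambda_n(\theta)\theta_{(n)}}\cdot\frac{\lambda_{n-j}(\theta)\theta_{(n-j)}}{(n-j)!}\cdot\frac{\theta}{j}$.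
   Context: Fix $\theta>0$. Write $\theta_{(0)}=1$ and $\theta_{(m)}=\theta(\theta+1)\cdots(\theta+m-1)$ for $m\ge1$. $\mathrm{ESF}(\theta)$ is the law of $(C_1(n),\ldots,C_n(n))$ with $\mathbb{P}(C_j(n)=c_j,\,1\le j\le n)=\frac{n!}{\theta_{(n)}}\prod_{j=1}^n(\theta/j)^{c_j}/c_j!$ whenever $\sum_j jc_j=n$ (cycle counts of a random permutation of $\{1,\ldots,n\}$ chosen with probability $\theta^k/\theta_{(n)}$ when it has $k$ cycles). For $n\ge1$, $\lambda_n(\theta)=\mathbb{P}(C_1(n)=0)=\frac{n!}{\theta_{(n)}}\sum_{j=0}^n(-1)^j\frac{\theta^j}{j!}\frac{\theta_{(n-j)}}{(n-j)!}$, and $\lambda_0(\theta)=1$ (so $\lambda_1(\theta)=0$). The derangement cycle counts $(\tilde C_2(n),\ldots,\tilde C_n(n))$ have the law of $(C_2(n),\ldots,C_n(n))$ conditioned on $C_1(n)=0$. For an integer-valued $X$ and $k\ge0$, $X^{[k]}=X(X-1)\cdots(X-k+1)$ denotes the falling factorial, with $X^{[0]}=1$. *)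

(* Defs.v *)
From HB Require Import structures.
From mathcomp Require Import all_boot all_order all_algebra.

Import Order.TTheory GRing.Theory Num.Theory.
Local Open Scope ring_scope.

Definition rising {R : nzRingType} (t : R) (m : nat) : R :=
  \prod_(i < m) (t + i%:R).

(* lambda_n(theta), by the explicit formula (gives lambda_0 = 1, lambda_1 = 0) *)
Definition lambda {R : fieldType} (t : R) (n : nat) : R :=
  n`!%:R / rising t n *
  \sum_(j < n.+1) (-1) ^+ j * (t ^+ j / j`!%:R) * (rising t (n - j) / (n - j)`!%:R).

(* A cycle-count configuration for size n: c i = C_{i+1}(n), i < n.
   (Each C_j(n) <= n, so values in 'I_n.+1 lose nothing.) *)
Definition config (n : nat) := {ffun 'I_n -> 'I_n.+1}.

Definition cnt {n : nat} (c : config n) (j : nat) : nat :=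
  if j is j'.+1 then
    (if (insub j' : option 'I_n) is Some i then nat_of_ord (c i) else 0%N)
  else 0%N.

(* ESF(theta) probability mass function on configurations *)
Definition esf {R : fieldType} (t : R) (n : nat) (c : config n) : R :=
  if (\sum_(i < n) (i.+1 * c i))%N == n then
    n`!%:R / rising t n *
    \prod_(i < n) ((t / i.+1%:R) ^+ (c i) / (c i)`!%:R)
  else 0.


(* Expectation of f(C~_2(n),...,C~_n(n)) for the derangement cycle counts,
   i.e. E[f(C(n)) | C_1(n) = 0] under ESF(theta). f receives j |-> C_j. *)
Definition dexp {R : fieldType} (t : R) (n : nat) (f : (nat -> nat) -> R) : R :=
  (\sum_(c : config n) esf t n c * (cnt c 1 == 0%N)%:R * f (cnt c)) /
  (\sum_(c : config n) esf t n c * (cnt c 1 == 0%N)%:R).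

(* Main.v *)
Require Import Defs.
From HB Require Import structures.
From mathcomp Require Import all_boot all_order all_algebra.
From mathcomp Require Import ring lra zify.
Import Order.TTheory GRing.Theory Num.Theory.
Local Open Scope ring_scope.

Section PolyMod.
Variable R : realFieldType.
Variable N : nat.

Definition small (p : {poly R}) := forall k, (k <= N)%N -> p`_k = 0.

Lemma small0 : small 0.
Proof. by move=> k _; rewrite coef0. Qed.

Lemma smallD p q : small p -> small q -> small (p + q).
Proof. by move=> hp hq k hk; rewrite coefD hp // hq // addr0. Qed.

Lemma smallN p : small p -> small (- p).
Proof. by move=> hp k hk; rewrite coefN hp // oppr0. Qed.

Lemma smallB p q : small p -> small q -> small (p - q).
Proof. by move=> hp hq; apply: smallD => //; apply: smallN. Qed.

Lemma smallMl p q : small p -> small (q * p).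
Proof.
move=> hp k hk; rewrite coefM big1 // => j _; rewrite hp ?mulr0 //.
by apply: leq_trans (leq_subr _ _) hk.
Qed.

Lemma smallMr p q : small p -> small (p * q).
Proof. by move=> hp; rewrite mulrC; apply: smallMl. Qed.

Lemma smallXn e p : (N < e)%N -> small ('X^e * p).
Proof.
move=> he k hk; rewrite coefXnM ifT //; lia.
Qed.

Lemma small_sum (I : Type) (r : seq I) (P : pred I) (F : I -> {poly R}) :
  (forall i, P i -> small (F i)) -> small (\sum_(i <- r | P i) F i).
Proof.
move=> h; elim/big_rec: _ => [|i x Pi hx]; first exact: small0.
by apply: smallD => //; apply: h.
Qed.

Lemma smallXd p : small p -> small ('X * p^`()).
Proof.
move=> hp k hk; rewrite coefXM; case: k hk => // k hk /=.
by rewrite coef_deriv hp // mul0rn.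
Qed.

Lemma small_eq p q : p = q -> small p -> small q.
Proof. by move=> ->. Qed.

Definition wt (a : R) (x : nat) : R := a ^+ x / x`!%:R.

Definition Ep (a : R) (s B : nat) : {poly R} :=
  \sum_(0 <= x < B) wt a x *: 'X^(s * x).

Lemma Ep_trunc a s B B' : (0 < s)%N -> (N < B)%N -> (B <= B')%N ->
  small (Ep a s B' - Ep a s B).
Proof.
move=> s0 hB hBB; rewrite /Ep (@big_cat_nat _ _ _ B) // addrC addKr.
rewrite big_seq; apply: small_sum => x; rewrite mem_index_iota => /andP[h1 h2] k hk.
rewrite coefZ coefXn.
rewrite [k == _](_ : _ = false) ?mulr0 //.
apply/eqP => e; have : (x <= s * x)%N by rewrite leq_pmull.
lia.
Qed.

Lemma XdXn e : 'X * ('X^e)^`() = 'X^e *+ e :> {poly R}.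
Proof.
case: e => [|e]; first by rewrite expr0 derivC mulr0 mulr0n.
by rewrite derivXn /= mulrnAr -exprS.
Qed.

Lemma XdEp a s B : 'X * (Ep a s B)^`() =
  \sum_(0 <= x < B) (wt a x * (s * x)%:R) *: 'X^(s * x).
Proof.
rewrite /Ep linear_sum mulr_sumr; apply: eq_bigr => x _ /=.

rewrite linearZ /= -scalerAr XdXn.
by rewrite -scalerA scaler_nat.

Qed.

Lemma wtS a y : wt a y.+1 * (y.+1)%:R = a * wt a y.
Proof.
rewrite /wt factS natrM exprS.
have h1 : (y.+1)%:R != 0 :> R by rewrite pnatr_eq0.
have h2 : (y`!)%:R != 0 :> R by rewrite pnatr_eq0 -lt0n fact_gt0.
by field; rewrite h2 addrC natr1.
Qed.

Lemma Ep_deriv a s : (0 < s)%N ->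
  small ('X * (Ep a s N.+1)^`() - (a * s%:R) *: ('X^s * Ep a s N.+1)).
Proof.
move=> s0; rewrite XdEp big_nat_recl // muln0 mulr0 scale0r add0r.
have -> : \sum_(0 <= i < N) (wt a i.+1 * (s * i.+1)%:R) *: 'X^(s * i.+1)
   = (a * s%:R) *: ('X^s * Ep a s N).
  rewrite /Ep mulr_sumr scaler_sumr; apply: eq_bigr => i _.
  rewrite natrM mulrA mulrAC wtS -scalerAr -exprD scalerA mulnS.
  by congr (_ *: _); ring.
rewrite -scalerBr -mulrBr -mul_polyC; apply: smallMl.
rewrite /Ep big_nat_recr //= opprD addrA subrr add0r mulrN; apply: smallN.
rewrite -scalerAr -exprD -mul_polyC mulrC; apply: smallXn.
have : (N.+1 <= s * N.+1)%N by rewrite leq_pmull.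
lia.
Qed.

Lemma prod_deriv (I : Type) (r : seq I) (p u : I -> {poly R}) :
  (forall i, small ('X * (p i)^`() - u i * p i)) ->
  small ('X * (\prod_(i <- r) p i)^`() - (\sum_(i <- r) u i) * \prod_(i <- r) p i).
Proof.
move=> h; elim: r => [|i r IH].
  by rewrite !big_nil -polyC1 derivC mulr0 mul0r subrr; apply: small0.
rewrite !big_cons derivM.
set P := \prod_(j <- r) p j; set U := \sum_(j <- r) u j.
have -> : 'X * ((p i)^`() * P + p i * P^`()) - (u i + U) * (p i * P)
   = ('X * (p i)^`() - u i * p i) * P + p i * ('X * P^`() - U * P) by ring.
by apply: smallD; [apply: smallMr | apply: smallMl].
Qed.

Lemma Ep_coef0 a s B : (0 < s)%N -> (0 < B)%N -> (Ep a s B)`_0 = 1.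
Proof.
move=> s0; case: B => // B _; rewrite /Ep big_nat_recl // coefD coefZ muln0 coefXn eqxx.
rewrite mulr1 /wt expr0 fact0 divr1 coef_sum big1 ?addr0 // => i _.
by rewrite coefZ coefXn eq_sym muln_eq0 /= (negbTE (lt0n_neq0 s0)) mulr0.
Qed.

Lemma Ep_coef1 a B j : (j < B)%N -> (Ep a 1 B)`_j = wt a j.
Proof.
move=> jB; rewrite /Ep coef_sum (bigD1_seq j) ?iota_uniq ?mem_index_iota //=.
rewrite coefZ mul1n coefXn eqxx mulr1 big1 ?addr0 // => i ij.
by rewrite coefZ mul1n coefXn eq_sym (negbTE ij) mulr0.
Qed.

Lemma prod_coef0 (I : Type) (r : seq I) (p : I -> {poly R}) :
  (\prod_(i <- r) p i)`_0 = \prod_(i <- r) (p i)`_0.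
Proof.
elim: r => [|i r IH]; first by rewrite !big_nil coef1.
by rewrite !big_cons coef0M IH.
Qed.

Definition Et (t : R) (i : nat) := Ep (t / (i.+1)%:R) i.+1 N.+1.
Definition Aprod (t : R) := \prod_(i < N) Et t i.

Lemma A_deriv t :
  small ('X * (Aprod t)^`() - (t *: \sum_(i < N) 'X^(i.+1)) * Aprod t).
Proof.
rewrite scaler_sumr; apply: prod_deriv => i.
have := @Ep_deriv (t / (i.+1)%:R) i.+1 isT.
rewrite divfK ?pnatr_eq0 //.
by rewrite /Et scalerAl.
Qed.

Lemma geom M : (1 - 'X) * \sum_(i < M) 'X^(i.+1) = 'X - 'X^(M.+1) :> {poly R}.
Proof.
elim: M => [|M IH]; first by rewrite big_ord0 mulr0 expr1 subrr.
rewrite big_ord_recr /= mulrDr IH (exprS _ M.+1).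
set y := 'X^(M.+1); ring.
Qed.

Lemma A_rec t k : (k < N)%N ->
  (Aprod t)`_k.+1 *+ k.+1 = (t + k%:R) * (Aprod t)`_k.
Proof.
move=> kN; set A := Aprod t.
set G := (1 - 'X) * ('X * A^`()) - t *: ('X * A).
have sG : small G.
  have -> : G = (1 - 'X) * ('X * A^`() - (t *: \sum_(i < N) 'X^(i.+1)) * A)
     - (t *: 'X^(N.+1)) * A.
    rewrite /G mulrBr !mulrA -scalerAl -scalerAr geom -!mul_polyC.
    set Xn := 'X^(N.+1); ring.
  apply: smallB; first by apply: smallMl; apply: A_deriv.
  by rewrite -mul_polyC -mulrA; apply: smallMl; apply: smallXn.
have := sG k.+1 kN; rewrite /G mulrBl mul1r !coefB coefZ !coefXM /= coef_deriv.
case: k kN => [|k] kN /=.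
  by rewrite subr0 addr0 => /eqP; rewrite subr_eq0 mulr1n => /eqP.
move=> h; rewrite coef_deriv in h; move/eqP: h; rewrite subr_eq0 subr_eq => /eqP ->.
by rewrite mulrDl mulr_natl.
Qed.

Lemma A_coef t k : (k <= N)%N -> (Aprod t)`_k = rising t k / k`!%:R.
Proof.
elim: k => [|k IH] kN.
  rewrite /Aprod prod_coef0 big1; last by move=> i _; exact: Ep_coef0.
  by rewrite /rising big_ord0 fact0 divr1.
have h := @A_rec t k kN; rewrite (IH (ltnW kN)) in h.
have k1 : (k.+1)%:R != 0 :> R by rewrite pnatr_eq0.
have kf : (k`!)%:R != 0 :> R by rewrite pnatr_eq0 -lt0n fact_gt0.
apply: (mulIf k1); rewrite mulr_natr h /rising big_ord_recr /= factS natrM.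
set P := \prod_(i < k) _.
by field; rewrite kf addrC natr1.
Qed.

Lemma QE0 t : small (Ep (-t) 1 N.+1 * Ep t 1 N.+1 - 1).
Proof.
set Q := Ep (-t) 1 N.+1; set E := Ep t 1 N.+1; set u := Q * E.
have h1 : small ('X * Q^`() + t *: ('X * Q)).
  by have := @Ep_deriv (-t) 1 isT; rewrite mulr1 expr1 scaleNr opprK.
have h2 : small ('X * E^`() - t *: ('X * E)).
  by have := @Ep_deriv t 1 isT; rewrite mulr1 expr1.
have sX : small ('X * u^`()).
  apply: (@small_eq (('X * Q^`() + t *: ('X * Q)) * E
            + Q * ('X * E^`() - t *: ('X * E)))).
    rewrite /u derivM -!mul_polyC; ring.
  by apply: smallD; [apply: smallMr | apply: smallMl].
move=> k kN; rewrite coefB coef1; case: k kN => [|k] kN.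
  by rewrite /u coef0M /Q /E !Ep_coef0 // mulr1 subrr.
have := sX k.+1 kN; rewrite coefXM /= coef_deriv => /eqP.
by rewrite mulrn_eq0 /= => /eqP ->; rewrite subrr.
Qed.

Definition P0 (t : R) := \prod_(i < N) (if (i : nat) == 0%N then 1 else Et t i).

Lemma A_split t : (0 < N)%N -> Aprod t = Ep t 1 N.+1 * P0 t.
Proof.
move=> N0; rewrite /Aprod /P0 (bigD1 (Ordinal N0)) //= [in RHS](bigD1 (Ordinal N0)) //= mul1r.
rewrite /Et divr1; congr (_ * _); apply: eq_bigr => i hi.
by rewrite ifF //; apply: contraNF hi => /eqP h; apply/eqP/val_inj.
Qed.

Lemma P0_coef t k : (0 < N)%N -> (k <= N)%N ->
  (P0 t)`_k = \sum_(j < k.+1) wt (-t) j * (rising t (k - j) / (k - j)`!%:R).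
Proof.
move=> N0 kN.
have s : small (Ep (-t) 1 N.+1 * Aprod t - P0 t).
  rewrite A_split // mulrA -{2}(mul1r (P0 t)) -mulrBl; apply: smallMr; exact: QE0.
have := s k kN; rewrite coefB => /eqP; rewrite subr_eq0 => /eqP <-.
rewrite coefM; apply: eq_bigr => j _.
rewrite Ep_coef1; last by have := ltn_ord j; lia.
by rewrite A_coef //; lia.
Qed.


Lemma Sf_trunc (f : nat -> R) s B B' : (0 < s)%N -> (N < B)%N -> (B <= B')%N ->
  small (\sum_(0 <= x < B') f x *: 'X^(s * x) - \sum_(0 <= x < B) f x *: 'X^(s * x)).
Proof.
move=> s0 hB hBB; rewrite (@big_cat_nat _ _ _ B) // addrC addKr.
rewrite big_seq; apply: small_sum => x; rewrite mem_index_iota => /andP[h1 h2] k hk.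
rewrite coefZ coefXn.
rewrite [k == _](_ : _ = false) ?mulr0 //.
apply/eqP => e; have : (x <= s * x)%N by rewrite leq_pmull.
lia.
Qed.

Lemma wt_shift a x r : wt a (x + r) * ((x + r) ^_ r)%:R = a ^+ r * wt a x.
Proof.
have h := ffact_fact (leq_addl x r); rewrite addnK in h.
have xf : (x`!)%:R != 0 :> R by rewrite pnatr_eq0 -lt0n fact_gt0.
have yf : ((x + r)`!)%:R != 0 :> R by rewrite pnatr_eq0 -lt0n fact_gt0.
rewrite /wt -h natrM in yf *; rewrite exprD.
move: yf; set F := ((x + r) ^_ r)%:R; set G := (x`!)%:R => yf.
have Fn : F != 0 by apply: contraNneq yf => ->; rewrite mul0r.
by field; rewrite Fn xf.
Qed.

Lemma shift_ffact a s B r :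
  \sum_(0 <= x < B + r) (wt a x * (x ^_ r)%:R) *: 'X^(s * x)
  = (a ^+ r) *: ('X^(s * r) * Ep a s B).
Proof.
rewrite (@big_cat_nat _ _ _ r) ?leq_addl // big_nat_cond big1 ?add0r; last first.
  by move=> x /andP[/andP[_ h] _]; rewrite ffact_small // mulr0 scale0r.
rewrite Monoid.mul1m -{1}(add0n r) big_addn addnK /Ep mulr_sumr scaler_sumr; apply: eq_bigr => x _.
rewrite wt_shift -scalerA -scalerAr -exprD; congr (_ *: (_ *: _)); congr ('X^_); ring.
Qed.

Lemma small_prod (I : Type) (r : seq I) (p q : I -> {poly R}) :
  (forall i, small (p i - q i)) -> small (\prod_(i <- r) p i - \prod_(i <- r) q i).
Proof.
move=> h; elim: r => [|i r IH]; first by rewrite !big_nil subrr; apply: small0.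
rewrite !big_cons.
have -> : p i * \prod_(j <- r) p j - q i * \prod_(j <- r) q j
  = (p i - q i) * \prod_(j <- r) p j + q i * (\prod_(j <- r) p j - \prod_(j <- r) q j) by ring.
by apply: smallD; [apply: smallMr | apply: smallMl].
Qed.

End PolyMod.

Lemma prod_monom (R : realFieldType) (I : Type) (r : seq I) (a : I -> R) (e : I -> nat) :
  \prod_(i <- r) (a i *: 'X^(e i)) = (\prod_(i <- r) a i) *: 'X^(\sum_(i <- r) e i) :> {poly R}.
Proof.
elim: r => [|i r IH]; first by rewrite !big_nil expr0 scale1r.
by rewrite !big_cons IH -scalerAl -scalerAr scalerA exprD.
Qed.

Lemma bridge (R : realFieldType) (n : nat) (g : nat -> nat -> R) :
  \sum_(c : config n) (((\sum_(i < n) i.+1 * c i)%N == n)%:R * \prod_(i < n) g i (c i))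
  = (\prod_(i < n) \sum_(x < n.+1) g i x *: 'X^(i.+1 * x))`_n.
Proof.
rewrite bigA_distr_bigA coef_sum; apply: eq_bigr => c _.
rewrite prod_monom coefZ coefXn mulrC; congr (_ * _%:R).
by rewrite eq_sym.
Qed.

Lemma reidx (T : Type) (idx : T) (op : Monoid.law idx) (n b : nat) (phi : nat -> T) :
  (1 <= b <= n)%N ->
  \big[op/idx]_(i < n) (if (1 <= i < b)%N then phi i.+1 else idx)
  = \big[op/idx]_(2 <= j < b.+1) phi j.
Proof.
move=> /andP[b1 bn].
rewrite -(big_mkord xpredT (fun i => if (1 <= i < b)%N then phi i.+1 else idx)).
rewrite (@big_cat_nat _ _ _ b) //=.
rewrite [X in op _ X](_ : _ = idx); last first.
  rewrite big_nat_cond big1 // => i /andP[/andP[h1 h2] _].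
  by rewrite ifF //; apply/negbTE/negP => /andP[_ h]; lia.
rewrite Monoid.mulm1.
rewrite (@big_cat_nat _ _ _ 1) // big_nat1 /= Monoid.mul1m.
rewrite [in RHS]big_add1 /= big_nat_cond [in RHS]big_nat_cond.
by apply: eq_bigr => i /andP[/andP[h1 h2] _]; rewrite h1 h2.
Qed.

Arguments wt {R}. Arguments Ep {R}. Arguments Et {R}. Arguments P0 {R}.
Arguments small {R}. Arguments Aprod {R}.

Lemma cntS n (c : config n) (i : 'I_n) : cnt c i.+1 = c i.
Proof. by rewrite /cnt valK. Qed.

Lemma ind_prod (R : realFieldType) n (c : config n) : (0 < n)%N ->
  ((cnt c 1 == 0)%N%:R : R) = \prod_(i < n) (if (i : nat) == 0%N then ((c i : nat) == 0%N)%:R else 1).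
Proof.
move=> n0; rewrite (bigD1 (Ordinal n0)) //= big1 ?mulr1; first by rewrite -(@cntS n c (Ordinal n0)).
move=> i hi; rewrite ifF //; apply: contraNF hi => /eqP h; apply/eqP/val_inj.
by rewrite /= h.
Qed.

Lemma summand (R : realFieldType) (t : R) n (c : config n) (H : nat -> nat -> R) F :
  (0 < n)%N -> F = \prod_(i < n) H i (c i) ->
  esf t n c * (cnt c 1 == 0)%N%:R * F = n`!%:R / rising t n *
   (((\sum_(i < n) i.+1 * c i)%N == n)%:R *
    \prod_(i < n) (wt (t / (i.+1)%:R) (c i) *
      (if (i : nat) == 0%N then ((c i : nat) == 0%N)%:R else 1) * H i (c i))).
Proof.
move=> n0 ->; rewrite (@ind_prod R n c n0) /esf !big_split /=.
case: ifP => _; last by rewrite !mul0r mulr0.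
by rewrite mul1r /wt; ring.
Qed.

Definition Hf (R : realFieldType) (b : nat) (r : nat -> nat) (i x : nat) : R :=
  if (1 <= i < b)%N then (x ^_ (r i.+1))%:R else 1.

Definition Gf (R : realFieldType) (t : R) (H : nat -> nat -> R) (i x : nat) : R :=
  wt (t / (i.+1)%:R) x * (if i == 0%N then (x == 0%N)%:R else 1) * H i x.

Definition qf (R : realFieldType) (t : R) n b (r : nat -> nat) (i : nat) : {poly R} :=
  if i == 0%N then 1 else
  if (1 <= i < b)%N then ((t / (i.+1)%:R) ^+ (r i.+1) *: 'X^(i.+1 * r i.+1)) * Et n t i
  else Et n t i.

Arguments Gf {R}. Arguments qf {R}.

Lemma factor0 (R : realFieldType) (t : R) n H :
  \sum_(x < n.+1) Gf t H 0 x *: 'X^(1 * x) = (H 0 0)%:P.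
Proof.
rewrite big_ord_recl /= big1 ?addr0.
  by rewrite /Gf muln0 expr0 /wt expr0 fact0 divr1 !mul1r alg_polyC.
by move=> x _; rewrite /Gf /bump /= add1n /= mulr0 mul0r scale0r.
Qed.

Lemma factor_num (R : realFieldType) (t : R) n b r (i : nat) :
  small n (\sum_(x < n.+1) Gf t (Hf R b r) i x *: 'X^(i.+1 * x) - qf t n b r i).
Proof.
rewrite /qf; case: (boolP (i == 0%N)) => [/eqP -> | i0].
  by rewrite factor0 /Hf /= subrr; apply: small0.
have Hi0 : forall x, Gf t (Hf R b r) i x = wt (t / (i.+1)%:R) x * Hf R b r i x.
  by move=> x; rewrite /Gf (negbTE i0) mulr1.
case: ifP => hb.
  set a := t / (i.+1)%:R; set s := i.+1; set k := r i.+1.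
  have e1 : \sum_(x < n.+1) Gf t (Hf R b r) i x *: 'X^(s * x)
      = \sum_(0 <= x < n.+1) (wt a x * (x ^_ k)%:R) *: 'X^(s * x).
    by rewrite big_mkord; apply: eq_bigr => x _; rewrite Hi0 /Hf hb.
  rewrite e1 -scalerAl -(@shift_ffact R a s n.+1 k).
  rewrite -opprB; apply: smallN; apply: Sf_trunc => //; exact: leq_addr.
rewrite /Et /Ep big_mkord (_ : \sum_(x < n.+1) _ = \sum_(x < n.+1) wt (t / (i.+1)%:R) x *: 'X^(i.+1 * x)).
  by rewrite subrr; apply: small0.
by apply: eq_bigr => x _; rewrite Hi0 /Hf hb mulr1.
Qed.

Lemma rising_neq0 (R : realFieldType) (t : R) k : 0 < t -> rising t k != 0.
Proof.
move=> t0; rewrite /rising; apply: lt0r_neq0; apply: prodr_gt0 => i _.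
by apply: ltr_wpDr => //; rewrite ler0n.
Qed.

Lemma lam_id (R : realFieldType) (t : R) n k : (0 < n)%N -> (k <= n)%N ->
  lambda t k = k`!%:R / rising t k * (P0 n t)`_k.
Proof.
move=> n0 kn; rewrite /lambda (@P0_coef R n t k n0 kn); congr (_ * _).
by apply: eq_bigr => j _; rewrite /wt -[in RHS](mulN1r t) exprMn !mulrA.
Qed.

Lemma factor_den (R : realFieldType) (t : R) n (i : nat) :
  \sum_(x < n.+1) Gf t (fun _ _ => 1) i x *: 'X^(i.+1 * x) = if i == 0%N then 1 else Et n t i.
Proof.
case: (boolP (i == 0%N)) => [/eqP -> | i0]; first by rewrite factor0.
rewrite /Et /Ep big_mkord; apply: eq_bigr => x _.
by rewrite /Gf (negbTE i0) !mulr1.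
Qed.

Lemma qf_split (R : realFieldType) (t : R) n b r (i : nat) :
  qf t n b r i = (if (1 <= i < b)%N then
     (t / (i.+1)%:R) ^+ (r i.+1) *: 'X^(i.+1 * r i.+1) else 1)
   * (if i == 0%N then 1 else Et n t i).
Proof.
rewrite /qf; case: (boolP (i == 0%N)) => [/eqP -> | i0] /=; first by rewrite mulr1.
by case: ifP => _; rewrite ?mul1r.
Qed.

Lemma part1 (R : realFieldType) (theta : R) (n b : nat) (r : nat -> nat) :
  0 < theta -> (2 <= n)%N -> (2 <= b <= n)%N ->
  dexp theta n (fun C => \prod_(2 <= j < b.+1) ((C j) ^_ (r j))%:R)
  = ((\sum_(2 <= j < b.+1) j * r j)%N <= n)%N%:R * (n`!%:R / (lambda theta n * rising theta n)) *
    (lambda theta (n - (\sum_(2 <= j < b.+1) j * r j)%N) * rising theta (n - (\sum_(2 <= j < b.+1) j * r j)%N)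
      / (n - (\sum_(2 <= j < b.+1) j * r j)%N)`!%:R) *
    \prod_(2 <= j < b.+1) (theta / j%:R) ^+ r j.
Proof.
move=> t0 n2 /andP[b2 bn].
have n0 : (0 < n)%N by lia.
have b1n : (1 <= b <= n)%N by apply/andP; split => //; lia.
set m := (\sum_(2 <= j < b.+1) j * r j)%N.
set C := \prod_(2 <= j < b.+1) (theta / j%:R) ^+ r j.
set K := n`!%:R / rising theta n.
have Num : \sum_(c : config n) esf theta n c * (cnt c 1 == 0)%N%:R *
      (\prod_(2 <= j < b.+1) ((cnt c j) ^_ (r j))%:R)
    = K * (\prod_(i < n) \sum_(x < n.+1) Gf theta (Hf R b r) i x *: 'X^(i.+1 * x))`_n.
  rewrite -bridge mulr_sumr; apply: eq_bigr => c _.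
  rewrite (@summand R theta n c (Hf R b r) _ n0) //.
  rewrite -(@reidx R 1 *%R n b (fun j => ((cnt c j) ^_ (r j))%:R)) //.
  by apply: eq_bigr => i _; rewrite /Hf cntS.
have Den : \sum_(c : config n) esf theta n c * (cnt c 1 == 0)%N%:R
    = K * (P0 n theta)`_n.
  have -> : P0 n theta = \prod_(i < n) \sum_(x < n.+1) Gf theta (fun _ _ => 1) i x *: 'X^(i.+1 * x).
    by apply: eq_bigr => i _; rewrite factor_den.
  rewrite -bridge mulr_sumr; apply: eq_bigr => c _.
  rewrite -[LHS]mulr1 (@summand R theta n c (fun _ _ => 1) _ n0) //.
  by rewrite big1.
have Pn : (\prod_(i < n) \sum_(x < n.+1) Gf theta (Hf R b r) i x *: 'X^(i.+1 * x))`_n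
    = C * (if (n < m)%N then 0 else (P0 n theta)`_(n - m)).
  have s := @small_prod R n _ (index_enum (ordinal n))
    (fun i => \sum_(x < n.+1) Gf theta (Hf R b r) i x *: 'X^(i.+1 * x))
    (fun i => qf theta n b r i) (fun i : 'I_n => factor_num R theta n b r i).
  move: (s n (leqnn n)); rewrite coefB => /eqP; rewrite subr_eq0 => /eqP ->.
  rewrite (eq_bigr _ (fun (i : 'I_n) _ => qf_split R theta n b r i)) big_split /=.
  rewrite (@reidx _ 1 *%R n b (fun j => (theta / j%:R) ^+ r j *: 'X^(j * r j))) //.
  by rewrite prod_monom -scalerAl coefZ coefXnM.
rewrite /dexp Num Den Pn.
case: ltnP => hm; first by rewrite ?mulr0 ?mul0r.
rewrite ?hm mul1r.
set D := (P0 n theta)`_n; set E := (P0 n theta)`_(n - m).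
have rn := @rising_neq0 R theta n t0; have rm := @rising_neq0 R theta (n - m) t0.
have fn : (n`!)%:R != 0 :> R by rewrite pnatr_eq0 -lt0n fact_gt0.
have fm : ((n - m)`!)%:R != 0 :> R by rewrite pnatr_eq0 -lt0n fact_gt0.
have Kn : K != 0 by rewrite mulf_neq0 // invr_eq0.
have e1 : n`!%:R / (lambda theta n * rising theta n) = D^-1.
  rewrite (@lam_id R theta n n n0 (leqnn n)).
  have -> : n`!%:R / rising theta n * D * rising theta n = n`!%:R * D by field.
  by rewrite invfM mulrA divff // mul1r.
have e2 : lambda theta (n - m) * rising theta (n - m) / (n - m)`!%:R = E.
  rewrite (@lam_id R theta n (n - m) n0 (leq_subr m n)) -/E.
  move: fm rm; set F := ((n - m)`!)%:R; set G := rising theta (n - m) => fm rm.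
  by field; rewrite fm rm.
rewrite e1 e2 invfM mulrACA divff // mul1r; ring.
Qed.

Lemma dexp_ext (R : realFieldType) (t : R) n f g :
  (forall C, f C = g C) -> dexp t n f = dexp t n g.
Proof. by move=> h; rewrite /dexp; congr (_ / _); apply: eq_bigr => c _; rewrite h. Qed.

Lemma single_prod (T : Type) (idx : T) (op : Monoid.law idx) (j : nat) (F : nat -> bool -> T) :
  (2 <= j)%N -> (forall i, F i false = idx) ->
  \big[op/idx]_(2 <= i < j.+1) F i (i == j) = F j true.
Proof.
move=> j2 h; rewrite big_nat_recr //= eqxx big_nat_cond big1 ?Monoid.mul1m //.
by move=> i /andP[/andP[_ hi] _]; rewrite ltn_eqF.
Qed.

Theorem mainTheorem9 (R : realFieldType) (theta : R) (n b : nat) (r : nat -> nat) :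
  0 < theta -> (2 <= n)%N -> (2 <= b <= n)%N ->
  let m := (\sum_(2 <= j < b.+1) j * r j)%N in
  dexp theta n (fun C => \prod_(2 <= j < b.+1) ((C j) ^_ (r j))%:R)
  = (m <= n)%N%:R * (n`!%:R / (lambda theta n * rising theta n)) *
    (lambda theta (n - m) * rising theta (n - m) / (n - m)`!%:R) *
    \prod_(2 <= j < b.+1) (theta / j%:R) ^+ r j
  /\
  (forall j : nat, (2 <= j <= n)%N ->
    dexp theta n (fun C => (C j)%:R)
    = (n`!%:R / (lambda theta n * rising theta n)) *
      (lambda theta (n - j) * rising theta (n - j) / (n - j)`!%:R) *
      (theta / j%:R)).
Proof.
move=> t0 n2 hb m; split; first exact: part1.
move=> j hj; have j2 : (2 <= j)%N by case/andP: hj.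
have jn : (j <= n)%N by case/andP: hj.
have := @part1 R theta n j (fun i => (i == j : nat)) t0 n2 hj.
rewrite (@single_prod _ 0%N addn j (fun i (e : bool) => i * e)%N) //; last by move=> i; rewrite muln0.
rewrite (@single_prod _ 1 *%R j (fun i (e : bool) => (theta / i%:R) ^+ e)) //.
rewrite /= muln1 jn mul1r expr1 => <-.
apply: dexp_ext => C.
rewrite (@single_prod _ 1 *%R j (fun i (e : bool) => ((C i) ^_ e)%:R)) //.
by rewrite ffactn1.
Qed.
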